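(* Let $r\in\{1,\infty\}$, $N\in\{0,2,3,\ldots\}$, and let $(G,+,p)\in\mathfrak{G}_r(N)$ be a valued group with bounded value. Let $A$ be a nonempty subset of $G$ and $f\in E_r(A)$. If $N>2$, assume that $$\Bigl|p\Bigl(\sum_{k=1}^N a_k\Bigr)-f(a_N)\Bigr|\leqslant\sum_{k=1}^{N-1}f(a_k)\quad\text{for all }a_1,\ldots,a_N\in A.$$ Then there is a valued group $(\tilde G,+,\tilde p)\in\mathfrak{G}_r(N)$ with bounded value enlarging $(G,+,p)$ such that $f$ is trivial in $\tilde G$, i.e. there is $b\in\tilde G$ with $f(a)=\tilde p(a-b)$ for all $a\in A$. If, in addition, $Q\subseteq\mathbb{R}$ satisfies: $Q\cap[0,\infty)$ is dense in $[0,\infty)$, $0\in Q$, and $(Q\cap[0,\infty))+(Q\cap[0,\infty))\subseteq Q$, and moreover $G$ is finite and $p(G)\cup f(A)\subseteq Q$, then $\tilde G$ may be taken finite with $\tilde p(\tilde G)\subseteq Q$.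
   Context: All groups are Abelian. A value on $G$ is $p\colon G\to[0,\infty)$ with $p(x)=0\iff x=0$, $p(-x)=p(x)$, $p(x+y)\leqslant p(x)+p(y)$; it induces the metric $d(x,y)=p(x-y)$. Class $\mathcal{O}_0$: $\lim_n p(na)/n=0$ for all $a$. $\mathfrak{G}_r(N)$: separable valued Abelian groups of class $\mathcal{O}_0$ with $p\leqslant r$ (vacuous if $r=\infty$) and of exponent $N$ if $N\neq0$. For $A\subseteq G$, a Katětov map on $A$ is $f\colon A\to[0,\infty)$ with $|f(x)-f(y)|\leqslant d(x,y)\leqslant f(x)+f(y)$ for all $x,y\in A$; $E_r(A)$ is the set of Katětov maps on $A$ bounded by $r$. Enlarging means $G\subseteq\tilde G$ with addition and value extended. *)

(* Defs.v *)
From HB Require Import structures.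
From mathcomp Require Import all_boot all_order all_algebra.
From mathcomp Require Import all_classical all_reals all_analysis.
Set Implicit Arguments. Unset Strict Implicit. Unset Printing Implicit Defensive.
Import numFieldTopology.Exports numFieldNormedType.Exports.
Import Order.TTheory GRing.Theory Num.Theory.
Local Open Scope classical_set_scope.
Local Open Scope ring_scope.

Inductive rparam := r_one | r_inf.

Definition bounded_by_r (R : realType) (r : rparam) (x : R) : Prop :=
  match r with r_one => x <= 1 | r_inf => True end.

Section Defs.
Variables (R : realType) (G : zmodType).

Definition is_value (p : G -> R) : Prop :=
  (forall x, 0 <= p x) /\
  (forall x, p x = 0 <-> x = 0) /\
  (forall x, p (- x) = p x) /\
  (forall x y, p (x + y) <= p x + p y).

Definition value_separable (p : G -> R) : Prop :=
  exists D : set G, countable D /\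
    forall x (e : R), 0 < e -> exists2 y, D y & p (x - y) < e.

Definition class_O0 (p : G -> R) : Prop :=
  forall a : G, (fun n : nat => p (a *+ n) / n%:R) @ \oo --> 0.

Definition has_exponent (N : nat) : Prop :=
  (N <> 0)%N -> forall x : G, x *+ N = 0.

Definition in_frakG (r : rparam) (N : nat) (p : G -> R) : Prop :=
  is_value p /\ value_separable p /\ class_O0 p /\
  (forall x, bounded_by_r r (p x)) /\ has_exponent N.

Definition bounded_value (p : G -> R) : Prop :=
  exists M : R, forall x, p x <= M.

(* Katětov map on A, bounded by r (f ∈ E_r(A)); f is given on all of G but only
   its values on A matter *)
Definition katetov_r (r : rparam) (p : G -> R) (A : set G) (f : G -> R) : Prop :=
  (forall x, A x -> 0 <= f x /\ bounded_by_r r (f x)) /\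
  (forall x y, A x -> A y ->
     `|f x - f y| <= p (x - y) /\ p (x - y) <= f x + f y).

End Defs.

Definition good_enlargement (R : realType) (r : rparam) (N : nat)
    (G : zmodType) (p : G -> R) (A : set G) (f : G -> R)
    (H : zmodType) (q : H -> R) (i : G -> H) : Prop :=
  in_frakG r N q /\ bounded_value q /\
  injective i /\ (forall x y, i (x + y) = i x + i y) /\
  (forall x, q (i x) = p x) /\
  exists b : H, forall a, A a -> f a = q (i a - b).

(* Main.v *)
Require Import Defs.
From HB Require Import structures.
From mathcomp Require Import all_boot all_order all_algebra.
From mathcomp Require Import all_classical all_reals all_analysis.
From mathcomp Require Import zify ring lra.
Set Implicit Arguments. Unset Strict Implicit. Unset Printing Implicit Defensive.
Import Order.TTheory GRing.Theory Num.Theory.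
Import numFieldTopology.Exports numFieldNormedType.Exports.
Local Open Scope classical_set_scope.
Local Open Scope ring_scope.

Lemma bounded_O0 (R : realType) (u : nat -> R) (B : R) :
  (forall n, 0 <= u n <= B) -> (fun n : nat => u n / n%:R) @ \oo --> 0.
Proof.
move=> hu.
apply: (@squeeze_cvgr _ _ _ _ (fun _ => 0) (fun n => (2 * B) * harmonic n)).
- near=> n.
  have n0 : (0 < n)%N by near: n; exists 1%N.
  have /andP[u0 uB] := hu n.
  rewrite divr_ge0 ?ler0n //=.
  have B0 : 0 <= B by apply: le_trans uB.
  rewrite /harmonic /=.
  have hn : (0 : R) < n%:R by rewrite ltr0n.
  rewrite ler_pdivrMr //; apply: le_trans uB _.
  rewrite mulrAC ler_pdivlMr ?ltr0n // (mulrC 2) -!mulrA.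
  apply: ler_wpM2l => //.
  rewrite -natrM ler_nat; lia.
- exact: cvg_cst.
- rewrite -(mulr0 (2 * B)); apply: cvgMl_tmp; exact: cvg_harmonic.
Unshelve. all: end_near.
Qed.

Lemma min_attained (R : realType) (s : seq R) (X : set R) :
  X !=set0 -> X `<=` [set` s] -> exists2 m, X m & forall y, X y -> m <= y.
Proof.
elim: s X => [|z s IH] X [x0 hx0] hsub.
  by have := hsub _ hx0.
have [[y hy]|hne] := pselect ((X `\` [set z]) !=set0).
  have [m [hm1 hm2] hmin] : exists2 m, (X `\` [set z]) m & forall y, (X `\` [set z]) y -> m <= y.
    apply: IH; first by exists y.
    move=> w [hw hwz]; have := hsub _ hw; rewrite /= inE => /orP [/eqP//|//].
  have [hz|hz] := pselect (X z).
    have [le|lt] := leP m z.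
      exists m => // w hw; have [->|wz] := eqVneq w z; first by [].
      by apply: hmin; split=> //; apply/eqP.
    exists z => // w hw; have [->|wz] := eqVneq w z; first by [].
    by apply: le_trans (ltW lt) (hmin _ _); split=> //; apply/eqP.
  exists m => // w hw; have [wz|wz] := eqVneq w z; first by rewrite wz in hw.
  by apply: hmin; split=> //; apply/eqP.
have hX : forall w, X w -> w = z.
  move=> w hw; apply: contra_notP hne => hwz; exists w; split=> //.
exists z; first by rewrite -(hX _ hx0).
by move=> w /hX ->.
Qed.

Lemma max_attained (R : realType) (s : seq R) (X : set R) :
  X !=set0 -> X `<=` [set` s] -> exists2 m, X m & forall y, X y -> y <= m.
Proof.
move=> [x0 hx0] hsub.
have [m hm hmin] : exists2 m, [set y | X (- y)] m & forall y, [set y | X (- y)] y -> m <= y.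
  apply: (@min_attained R (map -%R s)).
    by exists (- x0); rewrite /= opprK.
  by move=> y /= /hsub; rewrite /= => hy; rewrite -[y]opprK map_f.
exists (- m) => // y hy; rewrite -lerN2 opprK; apply: hmin; rewrite /= opprK.
done.
Qed.

Fixpoint lists (T : Type) (n : nat) (s : seq T) : seq (seq T) :=
  if n is n'.+1 then [::] :: [seq x :: l | x <- s, l <- lists n' s] else [:: [::]].

Lemma lists_mem (T : eqType) n (s : seq T) l : (size l <= n)%N -> (forall x, x \in l -> x \in s) ->
  l \in lists n s.
Proof.
elim: n l => [|n IH] [|x l] //= hs hl.
rewrite inE; apply/orP; right; apply: (allpairs_f (fun x l => x :: l)).
  by apply: hl; rewrite inE eqxx.
by apply: IH => // y hy; apply: hl; rewrite inE hy orbT.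
Qed.

Section Key.
Variables (R : realType) (G : zmodType) (p : G -> R) (A : set G) (f : G -> R) (M : nat).
Hypotheses (p0 : p 0 = 0) (pge0 : forall x, 0 <= p x)
  (pN : forall x, p (- x) = p x) (pD : forall x y, p (x + y) <= p x + p y).
Hypothesis fge0 : forall x, A x -> 0 <= f x.
Hypothesis kat1 : forall x y, A x -> A y -> f x <= p (x - y) + f y.
Hypothesis kat2 : forall x y, A x -> A y -> p (x - y) <= f x + f y.
Definition inA (l : seq G) := forall x, x \in l -> A x.
Hypothesis BH1 : forall l, inA l -> size l = M -> p (\sum_(x <- l) x) <= \sum_(x <- l) f x.
Hypothesis BH2 : forall a l, A a -> inA l -> (size l).+1 = M ->
  f a <= p (a + \sum_(x <- l) x) + \sum_(x <- l) f x.

Lemma inA_cons x l : inA (x :: l) -> A x /\ inA l.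
Proof. by move=> h; split=> [|y yl]; apply: h; rewrite inE ?eqxx ?yl ?orbT. Qed.
Lemma inA_take n l : inA l -> inA (take n l).
Proof. by move=> h x /mem_take; apply: h. Qed.
Lemma inA_drop n l : inA l -> inA (drop n l).
Proof. by move=> h x /mem_drop; apply: h. Qed.

Lemma pB x y : p (x - y) <= p x + p y.
Proof. by apply: le_trans (pD _ _) _; rewrite pN. Qed.

Lemma K1one l : inA l -> (M %| size l)%N -> p (\sum_(x <- l) x) <= \sum_(x <- l) f x.
Proof.
move: {2}(size l) (leqnn (size l)) => n; elim: n l => [|n IH] l.
  by rewrite leqn0 => /eqP /size0nil -> _ _; rewrite !big_nil p0.
case: l => [|y l'] hs hA hM; first by rewrite !big_nil p0.
set l := y :: l' in hs hA hM *.
have M0 : (0 < M)%N by case: M hM => //; rewrite dvd0n.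
have Ml : (M <= size l)%N by apply: dvdn_leq.
rewrite -(cat_take_drop M l) !big_cat /=.
apply: le_trans (pD _ _) _; apply: lerD.
  by apply: BH1; [exact: inA_take | rewrite size_take_min; apply/minn_idPl].
apply: IH; [|exact: inA_drop|].
  by rewrite size_drop; move: hs; rewrite /l /=; lia.
by rewrite size_drop dvdn_sub.
Qed.

Lemma K2one a l : A a -> inA l -> (M %| (size l).+1)%N ->
  f a <= p (a + \sum_(x <- l) x) + \sum_(x <- l) f x.
Proof.
move=> hA0; move: {2}(size l) (leqnn (size l)) => n; elim: n l => [|n IH] l.
  rewrite leqn0 => /eqP hs hA hM; apply: BH2 => //.
  by move: hM; rewrite hs dvdn1 => /eqP ->.
move=> hs hA hM.
have M0 : (0 < M)%N by case: M hM => //; rewrite dvd0n.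
have [hE|hNE] := eqVneq (size l).+1 M; first exact: BH2.
have Ml : (M <= size l)%N.
  have := dvdn_leq (ltn0Sn _) hM; rewrite leq_eqVlt eq_sym (negPf hNE) /=.
  by rewrite ltnS.
have h : f a <= p (a + \sum_(x <- drop M l) x) + \sum_(x <- drop M l) f x.
  apply: IH; [|exact: inA_drop|]; rewrite size_drop; first by move: hs; lia.
  have -> : ((size l - M).+1 = (size l).+1 - M)%N by lia.
  by rewrite dvdn_sub.
apply: le_trans h _.
set T := \sum_(x <- take M l) x; set D := \sum_(x <- drop M l) x.
have eS : \sum_(x <- l) x = T + D by rewrite -{1}(cat_take_drop M l) big_cat.
have eF : \sum_(x <- l) f x = \sum_(x <- take M l) f x + \sum_(x <- drop M l) f x.
  by rewrite -{1}(cat_take_drop M l) big_cat.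
have e : a + D = (a + (T + D)) - T by rewrite [T + D]addrC addrA addrK.
rewrite eS eF e [X in _ <= X]addrA lerD2r.
apply: le_trans (pB _ _) _; rewrite lerD2l.
apply: BH1; [exact: inA_take | rewrite size_take_min; apply/minn_idPl].
done.
Qed.


Definition sG (l : seq G) := \sum_(x <- l) x.
Definition sF (l : seq G) := \sum_(x <- l) f x.

Lemma K1 P Nn : inA P -> inA Nn ->
  (M%:Z %| (size P)%:Z - (size Nn)%:Z)%Z -> p (sG P - sG Nn) <= sF P + sF Nn.
Proof.
rewrite /sG /sF.
elim: P Nn => [|x P IH] [|y Nn] hP hN hM.
- by rewrite !big_nil subrr p0 addr0.
- rewrite big_nil add0r big_nil add0r pN; apply: K1one => //.
  by move: hM; rewrite dvdzE sub0r abszN.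
- rewrite big_nil subr0 big_nil addr0; apply: K1one => //.
  by move: hM; rewrite dvdzE subr0.
- have [hx hP'] := inA_cons hP; have [hy hN'] := inA_cons hN.
  rewrite !big_cons.
  have e : x + \sum_(j <- P) j - (y + \sum_(j <- Nn) j) =
     (x - y) + (\sum_(j <- P) j - \sum_(j <- Nn) j).
    by rewrite opprD addrACA.
  rewrite e; apply: le_trans (pD _ _) _.
  have -> : f x + \sum_(j <- P) f j + (f y + \sum_(j <- Nn) f j) =
    (f x + f y) + (\sum_(j <- P) f j + \sum_(j <- Nn) f j) by rewrite addrACA.
  apply: lerD; first exact: kat2.
  apply: IH => //.
  by move: hM; rewrite /= !intS opprD addrACA subrr add0r.
Qed.

Lemma K2 a P Nn : A a -> inA P -> inA Nn ->
  (M%:Z %| (size P)%:Z + 1 - (size Nn)%:Z)%Z ->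
  f a <= p (a + sG P - sG Nn) + sF P + sF Nn.
Proof.
rewrite /sG /sF => ha.
elim: P Nn => [|x P IH] [|y Nn] hP hN hM.
- rewrite !big_nil addr0 subr0 !addr0.
  have := K2one ha hN; rewrite big_nil addr0 big_nil addr0; apply.
  by move: hM; rewrite dvdzE.
- have [hy hN'] := inA_cons hN.
  rewrite !big_nil !addr0 big_cons.
  apply: le_trans (kat1 ha hy) _.
  rewrite big_cons [f y + _]addrC addrA lerD2r.
  have e : a - y = (a - (y + \sum_(j <- Nn) j)) + \sum_(j <- Nn) j.
    by rewrite opprD addrA subrK.
  rewrite e; apply: le_trans (pD _ _) _; rewrite lerD2l.
  apply: K1one => //.
  by move: hM; rewrite /= dvdzE intS add0r opprD addrA subrr sub0r abszN.
- rewrite big_nil subr0 big_nil addr0.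
  apply: K2one => //.
  by move: hM; rewrite dvdzE subr0 -PoszD addn1.
- have [hx hP'] := inA_cons hP; have [hy hN'] := inA_cons hN.
  rewrite !big_cons.
  have hI := IH Nn hP' hN'.
  have {hI} hI : f a <= p (a + \sum_(j <- P) j - \sum_(j <- Nn) j) + \sum_(j <- P) f j + \sum_(j <- Nn) f j.
    apply: hI; move: hM; rewrite /= !intS.
    by have -> : 1 + (size P)%:Z + 1 - (1 + (size Nn)%:Z) = (size P)%:Z + 1 - (size Nn)%:Z by ring.
  apply: le_trans hI _.
  set S := a + (x + \sum_(j <- P) j) - (y + \sum_(j <- Nn) j).
  have e' : S = (a + \sum_(j <- P) j - \sum_(j <- Nn) j) + (x - y).
    by rewrite /S opprD [a + (x + _)]addrCA addrACA addrC.
  have e : a + \sum_(j <- P) j - \sum_(j <- Nn) j = S - (x - y) by rewrite e' addrK.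
  rewrite e.
  have hxy := kat2 hx hy.
  have := pB S (x - y).
  set u := p (S - (x - y)); set v := p S.
  set FP := \sum_(j <- P) f j; set FN := \sum_(j <- Nn) f j.
  move=> h; lra.
Qed.

Variables (M0 : R) (a0 : G).
Hypotheses (pM0 : forall x, p x <= M0) (fM0 : forall a, A a -> f a <= M0) (ha0 : A a0).

Definition cost (x : G * int) P Nn := p (x.1 - sG P + sG Nn) + sF P + sF Nn.
Definition Vs (x : G * int) := [set v : R | exists P Nn, inA P /\ inA Nn /\
   (M%:Z %| x.2 + (size P)%:Z - (size Nn)%:Z)%Z /\ v = Num.min (cost x P Nn) M0].
Definition qv x := inf (Vs x).

Lemma M0ge0 : 0 <= M0. Proof. by apply: le_trans (pM0 0); rewrite p0. Qed.

Lemma sF_ge0 P : inA P -> 0 <= sF P.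
Proof. by move=> h; rewrite /sF big_seq; apply: sumr_ge0 => x /h /fge0. Qed.

Lemma cost_ge0 x P Nn : inA P -> inA Nn -> 0 <= cost x P Nn.
Proof. by move=> hP hN; rewrite /cost !addr_ge0 ?sF_ge0. Qed.

Lemma inA_nseq n : inA (nseq n a0).
Proof. by move=> x /nseqP [-> _]. Qed.

Lemma Vs_nonempty x : Vs x !=set0.
Proof.
case: x => g [] n.
  exists (Num.min (cost (g, Posz n) [::] (nseq n a0)) M0).
  exists [::], (nseq n a0); split; [done|split; [exact: inA_nseq|split=> //]].
  by rewrite /= size_nseq addr0 subrr dvdz0.
exists (Num.min (cost (g, Negz n) (nseq n.+1 a0) [::]) M0).
exists (nseq n.+1 a0), [::]; split; [exact: inA_nseq|split; [done|split=> //]].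
by rewrite /= size_nseq NegzE subr0 addNr dvdz0.
Qed.

Lemma Vs_ge0 x : lbound (Vs x) 0.
Proof.
move=> v [P [Nn [hP [hN [_ ->]]]]].
by rewrite le_min cost_ge0 ?M0ge0.
Qed.

Lemma qv_le x v : Vs x v -> qv x <= v.
Proof. by move=> hv; apply: ge_inf => //; exists 0; exact: Vs_ge0. Qed.

Lemma qv_ge x c : (forall v, Vs x v -> c <= v) -> c <= qv x.
Proof. by move=> h; apply: lb_le_inf; [exact: Vs_nonempty|exact: h]. Qed.

Lemma qv_ge0 x : 0 <= qv x.
Proof. by apply: qv_ge; exact: Vs_ge0. Qed.

Lemma qv_leM0 x : qv x <= M0.
Proof.
have [v hv] := Vs_nonempty x; apply: le_trans (qv_le hv) _.
by case: hv => P [Nn [_ [_ [_ ->]]]]; rewrite ge_min lexx orbT.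
Qed.

Lemma qv_zero k : (M%:Z %| k)%Z -> qv (0, k) = 0.
Proof.
move=> hk; apply/eqP; rewrite eq_le qv_ge0 andbT.
apply: qv_le; exists [::], [::]; split=> //; split=> //; split.
  suff -> : k + (size ([::] : seq G))%:Z - (size ([::] : seq G))%:Z = k by [].
  by rewrite /=; lia.
by rewrite /cost /sG /sF !big_nil !addr0 subr0 p0; apply/esym/min_idPl; exact: M0ge0.
Qed.

Lemma Vs_opp x v : Vs x v -> Vs (- x) v.
Proof.
case: x => g k [P [Nn [hP [hN [hM ->]]]]].
exists Nn, P; split=> //; split=> //; split.
  move: hM; rewrite /= !dvdzE.
  have -> : - k + (size Nn)%:Z - (size P)%:Z = - (k + (size P)%:Z - (size Nn)%:Z) by ring.
  by rewrite abszN.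
congr Num.min; rewrite /cost /= [in RHS]addrAC; congr (_ + _ + _).
by rewrite -pN !opprD !opprK addrAC.
Qed.

Lemma qv_opp x : qv (- x) = qv x.
Proof.
have h y : qv (- y) <= qv y.
  by apply: qv_ge => v hv; apply: qv_le; exact: Vs_opp.
by apply/eqP; rewrite eq_le h /= -{1}(opprK x) h.
Qed.

Lemma Vs_add x y v w : Vs x v -> Vs y w -> exists2 u, Vs (x + y) u & u <= v + w.
Proof.
case: x => g k; case: y => g' k'.
move=> [P [Nn [hP [hN [hM ->]]]]] [P' [Nn' [hP' [hN' [hM' ->]]]]].
have hPP : inA (P ++ P') by move=> z; rewrite mem_cat => /orP [] ?; [exact: hP|exact: hP'].
have hNN : inA (Nn ++ Nn') by move=> z; rewrite mem_cat => /orP [] ?; [exact: hN|exact: hN'].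
exists (Num.min (cost (g + g', k + k') (P ++ P') (Nn ++ Nn')) M0).
  exists (P ++ P'), (Nn ++ Nn'); split=> //; split=> //; split=> //.
  rewrite /= !size_cat !PoszD.
  have -> : k + k' + ((size P)%:Z + (size P')%:Z) - ((size Nn)%:Z + (size Nn')%:Z) =
    (k + (size P)%:Z - (size Nn)%:Z) + (k' + (size P')%:Z - (size Nn')%:Z) by ring.
  exact: rpredD.
have hc : cost (g + g', k + k') (P ++ P') (Nn ++ Nn') <= cost (g, k) P Nn + cost (g', k') P' Nn'.
  rewrite /cost /sG /sF /= !big_cat /=.
  set a1 := \sum_(x <- P) x; set a2 := \sum_(x <- P') x.
  set b1 := \sum_(x <- Nn) x; set b2 := \sum_(x <- Nn') x.
  have -> : g + g' - (a1 + a2) + (b1 + b2) = (g - a1 + b1) + (g' - a2 + b2).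
    by rewrite opprD [(g + g') + _]addrACA [LHS]addrACA.
  have := pD (g - a1 + b1) (g' - a2 + b2).
  set u1 := p (g - a1 + b1); set u2 := p (g' - a2 + b2).
  set c1 := \sum_(x <- P) f x; set c2 := \sum_(x <- P') f x.
  set d1 := \sum_(x <- Nn) f x; set d2 := \sum_(x <- Nn') f x.
  move=> h; lra.
have h1 := cost_ge0 (g, k) hP hN; have h2 := cost_ge0 (g', k') hP' hN'.
have hM0 := M0ge0.
move: hc h1 h2; set c := cost _ _ _; set c1 := cost _ _ _; set c2 := cost _ _ _.
move=> hc h1 h2.
have [e1|e1] := leP c1 M0; rewrite ?(min_l e1) ?(min_r (ltW e1));
have [e2|e2] := leP c2 M0; rewrite ?(min_l e2) ?(min_r (ltW e2));
  rewrite ge_min; apply/orP; [left; lra|right; lra|right; lra|right; lra].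
Qed.

Lemma qv_add x y : qv (x + y) <= qv x + qv y.
Proof.
have h1 : forall v w, Vs x v -> Vs y w -> qv (x + y) <= v + w.
  by move=> v w hv hw; have [u hu hle] := Vs_add hv hw; apply: le_trans (qv_le hu) hle.
have h2 : forall w, Vs y w -> qv (x + y) - w <= qv x.
  move=> w hw; apply: qv_ge => v hv; rewrite lerBlDr; exact: h1.
rewrite -lerBlDl; apply: qv_ge => w hw; rewrite lerBlDl -lerBlDr; exact: h2.
Qed.

Lemma qv_G g : qv (g, 0) = p g.
Proof.
apply/eqP; rewrite eq_le; apply/andP; split.
  apply: qv_le; exists [::], [::]; split=> //; split=> //; split.
    by rewrite /= !addr0.
  rewrite /cost /sG /sF !big_nil /= !addr0 subr0; apply/esym/min_idPl; exact: pM0.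
apply: qv_ge => v [P [Nn [hP [hN [hM ->]]]]].
rewrite le_min pM0 andbT /cost /=.
have hK := K1 hP hN; move: hM; rewrite /= add0r => /hK {}hK.
have e : g = (g - sG P + sG Nn) + (sG P - sG Nn).
  by rewrite -addrA [sG Nn + _]addrC subrK subrK.
have := pD (g - sG P + sG Nn) (sG P - sG Nn); rewrite -e => h.
move: h hK; set u := p (g - _ + _); set w := p (_ - _); move=> h hK.
by apply: le_trans h _; rewrite -addrA lerD2l.
Qed.

Lemma qv_A a : A a -> qv (a, -1) = f a.
Proof.
move=> ha; apply/eqP; rewrite eq_le; apply/andP; split.
  apply: qv_le; exists [:: a], [::]; split.
    by move=> z; rewrite inE => /eqP ->.
  split=> //; split; first by rewrite /= subr0 addNr dvdz0.
  rewrite /cost /sG /sF /= !big_cons !big_nil !addr0 subrr p0 add0r.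
  by apply/esym/min_idPl; exact: fM0.
apply: qv_ge => v [P [Nn [hP [hN [hM ->]]]]].
rewrite le_min fM0 // andbT /cost /=.
have hK := K2 ha hN hP; move: hM => /= hM.
have {}hK := hK _.
have : f a <= p (a + sG Nn - sG P) + sF Nn + sF P.
  apply: hK; move: hM; rewrite !dvdzE.
  have -> : (size Nn)%:Z + 1 - (size P)%:Z = - (-1 + (size P)%:Z - (size Nn)%:Z) by ring.
  by rewrite abszN.
by move=> h; apply: le_trans h _; rewrite addrAC [a + sG Nn - _]addrAC.
Qed.
Lemma sF_ge (d : R) P : (forall a, A a -> d <= f a) -> inA P -> (size P)%:R * d <= sF P.
Proof.
move=> hd; elim: P => [|x P IH] hP; first by rewrite /sF big_nil mul0r.
have [hx hP'] := inA_cons hP.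
rewrite /sF big_cons /= -addn1 natrD mulrDl mul1r addrC; apply: lerD; first exact: hd.
exact: IH.
Qed.

Lemma qv_attained (eA : seq G) (d : R) (K : nat) : (forall x, A x -> x \in eA) ->
  (forall a, A a -> d <= f a) -> 0 <= d -> M0 <= K%:R * d ->
  forall x, exists2 v, Vs x v & qv x = v.
Proof.
move=> heA hd d0 hK x.
have [m hm hmin] : exists2 m, Vs x m & forall y, Vs x y -> m <= y.
  apply: (@min_attained R (M0 :: [seq Num.min (cost x P Nn) M0 | P <- lists K eA, Nn <- lists K eA]) (Vs x) (Vs_nonempty x)).
  move=> v [P [Nn [hP [hN [_ ->]]]]].
  rewrite /= inE.
  have [hs|hs] := leqP (size P) K; have [hs'|hs'] := leqP (size Nn) K.
  1: apply/orP; right; apply: (allpairs_f (fun P Nn => Num.min (cost x P Nn) M0)).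
  1: by apply: lists_mem => // y /hP /heA.
  1: by apply: lists_mem => // y /hN /heA.
  1-3: suff -> : Num.min (cost x P Nn) M0 = M0 by rewrite eqxx.
  1-3: apply/min_idPr; rewrite /cost.
  1-3: have h1 := sF_ge hd hN; have h2 := sF_ge hd hP.
  1-3: have := pge0 (x.1 - sG P + sG Nn); have := sF_ge0 hN; have := sF_ge0 hP.
  1: have h3 : K%:R * d <= (size Nn)%:R * d by apply: ler_wpM2r => //; rewrite ler_nat ltnW.
  2,3: have h3 : K%:R * d <= (size P)%:R * d by apply: ler_wpM2r => //; rewrite ler_nat ltnW.
  1-3: lra.
exists m => //; apply/eqP; rewrite eq_le qv_le //=; exact: qv_ge.
Qed.
End Key.

Local Open Scope quotient_scope.
Section PQ.
Variables (R : realType) (T : zmodType) (q : T -> R).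
Hypotheses (q0 : q 0 = 0) (qge0 : forall x, 0 <= q x)
  (qN : forall x, q (- x) = q x) (qD : forall x y, q (x + y) <= q x + q y).

Definition qrel : rel T := fun x y => `[< q (x - y) = 0 >].

Lemma qrel_refl : reflexive qrel.
Proof. by move=> x; apply/asboolP; rewrite subrr q0. Qed.
Lemma qrel_sym : symmetric qrel.
Proof.
move=> x y; apply/asboolP/asboolP => h; by rewrite -qN opprB.
Qed.
Lemma qrel_trans : transitive qrel.
Proof.
move=> y x z /asboolP hxy /asboolP hyz; apply/asboolP.
apply/eqP; rewrite eq_le qge0 andbT.
have := qD (x - y) (y - z); rewrite hxy hyz addr0 addrA subrK //.
Qed.

Canonical qequiv := EquivRel qrel qrel_refl qrel_sym qrel_trans.
Definition QT := {eq_quot qequiv}.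
HB.instance Definition _ := Choice.on QT.
Definition pi' : T -> QT := \pi_QT.

Lemma piPE x y : pi' x = pi' y <-> q (x - y) = 0.
Proof. split; first by move/eqmodP/asboolP. by move=> h; apply/eqmodP/asboolP. Qed.

Lemma reprpi x : q (repr (pi' x) - x) = 0.
Proof. by apply/piPE; rewrite /pi' reprK. Qed.

Definition qadd (a b : QT) : QT := pi' (repr a + repr b).
Definition qopp (a : QT) : QT := pi' (- repr a).
Definition qzero : QT := pi' 0.

Lemma pi_add x y : qadd (pi' x) (pi' y) = pi' (x + y).
Proof.
apply/piPE; apply/eqP; rewrite eq_le qge0 andbT.
have -> : repr (pi' x) + repr (pi' y) - (x + y) = (repr (pi' x) - x) + (repr (pi' y) - y).
  by rewrite opprD addrACA.
by apply: le_trans (qD _ _) _; rewrite !reprpi addr0.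
Qed.
Lemma pi_opp x : qopp (pi' x) = pi' (- x).
Proof.
apply/piPE; rewrite -opprD qN; exact: reprpi.
Qed.
Lemma quotE (a : QT) : a = pi' (repr a).
Proof. by rewrite /pi' reprK. Qed.

Lemma qaddA : associative qadd.
Proof. by move=> a b c; rewrite (quotE a) (quotE b) (quotE c) !pi_add addrA. Qed.
Lemma qaddC : commutative qadd.
Proof. by move=> a b; rewrite (quotE a) (quotE b) !pi_add addrC. Qed.
Lemma qadd0 : left_id qzero qadd.
Proof. by move=> a; rewrite (quotE a) /qzero pi_add add0r. Qed.
Lemma qaddN : left_inverse qzero qopp qadd.
Proof. by move=> a; rewrite (quotE a) pi_opp pi_add addNr. Qed.

HB.instance Definition _ := GRing.isZmodule.Build QT qaddA qaddC qadd0 qaddN.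

Lemma piD x y : pi' (x + y) = pi' x + pi' y.
Proof. by rewrite -pi_add. Qed.
Lemma piN x : pi' (- x) = - pi' x.
Proof. by rewrite -pi_opp. Qed.

Definition qq (a : QT) : R := q (repr a).
Lemma qq_pi x : qq (pi' x) = q x.
Proof.
rewrite /qq; apply/eqP; rewrite eq_le; apply/andP; split.
  have := qD (repr (pi' x) - x) x; rewrite subrK reprpi add0r //.
have h0 : q (x - repr (pi' x)) = 0 by rewrite -qN opprB reprpi.
by have := qD (x - repr (pi' x)) (repr (pi' x)); rewrite subrK h0 add0r.
Qed.
End PQ.

Local Close Scope quotient_scope.

Section Build.
Variables (R : realType) (r : rparam) (N : nat) (G : zmodType) (p : G -> R)
  (A : set G) (f : G -> R) (M : nat) (M0 : R) (a0 : G).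
Hypotheses (hval : is_value p) (hsep : value_separable p) (hexp : has_exponent G N)
  (kat : katetov_r r p A f) (ha0 : A a0).
Hypothesis BH1 : forall l, inA A l -> size l = M -> p (\sum_(x <- l) x) <= \sum_(x <- l) f x.
Hypothesis BH2 : forall a l, A a -> inA A l -> (size l).+1 = M ->
  f a <= p (a + \sum_(x <- l) x) + \sum_(x <- l) f x.
Hypotheses (pM0 : forall x, p x <= M0) (fM0 : forall a, A a -> f a <= M0)
  (hrM0 : bounded_by_r r M0) (hMN : (N <> 0)%N -> M = N).

Lemma p0 : p 0 = 0. Proof. by case: hval => _ [h _]; apply/h. Qed.
Lemma pge0 x : 0 <= p x. Proof. by case: hval. Qed.
Lemma pN x : p (- x) = p x. Proof. by case: hval => _ [_ []]. Qed.
Lemma pD x y : p (x + y) <= p x + p y. Proof. by case: hval => _ [_ [_]]. Qed.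
Lemma fge0 x : A x -> 0 <= f x. Proof. by case: kat => h _ /h []. Qed.
Lemma kat1 x y : A x -> A y -> f x <= p (x - y) + f y.
Proof.
case: kat => _ h hx hy; have [h1 _] := h _ _ hx hy.
by move: h1; rewrite ler_norml => /andP [_ h1]; lra.
Qed.
Lemma kat2 x y : A x -> A y -> p (x - y) <= f x + f y.
Proof. by case: kat => _ h hx hy; have [_ h2] := h _ _ hx hy. Qed.

Definition qb : (G * int)%type -> R := qv p A f M M0.
Lemma qb0 : qb 0 = 0.
Proof. by rewrite /qb (qv_zero (M:=M) p0 pge0 fge0 pM0 ha0) ?dvdz0. Qed.
Lemma qbge0 x : 0 <= qb x.
Proof. rewrite /qb; exact: (qv_ge0 M p0 pge0 fge0 pM0 ha0). Qed.
Lemma qbN x : qb (- x) = qb x.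
Proof. rewrite /qb; exact: (qv_opp M p0 pge0 pN fge0 pM0 ha0). Qed.
Lemma qbD x y : qb (x + y) <= qb x + qb y.
Proof. rewrite /qb; exact: (qv_add M p0 pge0 pD fge0 pM0 ha0). Qed.
Lemma qbG g : qb (g, 0) = p g.
Proof. rewrite /qb; exact: (qv_G (M:=M) p0 pge0 pN pD fge0 kat2 BH1 pM0 ha0). Qed.
Lemma qbA a : A a -> qb (a, -1) = f a.
Proof. rewrite /qb; exact: (qv_A (M:=M) p0 pge0 pN pD fge0 kat1 kat2 BH1 BH2 pM0 fM0 ha0). Qed.
Lemma qbM0 x : qb x <= M0.
Proof. rewrite /qb; exact: (qv_leM0 M p0 pge0 fge0 pM0 ha0). Qed.
Lemma qbZ k : (M%:Z %| k)%Z -> qb (0, k) = 0.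
Proof. rewrite /qb; exact: (qv_zero (M:=M) p0 pge0 fge0 pM0 ha0). Qed.

Definition Hq := QT qb0 qbge0 qbN qbD.
Definition piq : (G * int)%type -> Hq := pi' qb0 qbge0 qbN qbD.
Definition qH : Hq -> R := @qq _ _ qb qb0 qbge0 qbN qbD.
Definition iq (g : G) : Hq := piq (g, 0).
Definition bq : Hq := piq (0, 1).

Lemma piqE x y : piq x = piq y <-> qb (x - y) = 0.
Proof. exact: piPE. Qed.
Lemma qH_pi x : qH (piq x) = qb x.
Proof. exact: qq_pi. Qed.
Lemma piq_surj (y : Hq) : exists x, y = piq x.
Proof. by exists (repr y); rewrite /piq /pi' reprK. Qed.
Lemma piqD x y : piq (x + y) = piq x + piq y.
Proof. exact: piD. Qed.
Lemma piqN x : piq (- x) = - piq x.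
Proof. exact: piN. Qed.
Lemma piq0 : piq 0 = 0.
Proof. by []. Qed.
Lemma piqB x y : piq (x - y) = piq x - piq y.
Proof. by rewrite piqD piqN. Qed.
Lemma piqMn x n : piq (x *+ n) = piq x *+ n.
Proof. by elim: n => [|n IH]; rewrite ?mulr0n ?piq0 // !mulrS piqD IH. Qed.

Lemma qH_value : is_value qH.
Proof.
split; [|split; [|split]].
- by move=> y; have [x ->] := piq_surj y; rewrite qH_pi qbge0.
- move=> y; have [x ->] := piq_surj y; rewrite qH_pi -piq0; split.
    by move=> h; apply/piqE; rewrite subr0.
  by move/piqE; rewrite subr0.
- by move=> y; have [x ->] := piq_surj y; rewrite -piqN !qH_pi qbN.
- move=> y z; have [x ->] := piq_surj y; have [w ->] := piq_surj z.
  by rewrite -piqD !qH_pi qbD.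
Qed.

Lemma pair_sub (g g' : G) (k k' : int) : ((g, k) - (g', k') : (G * int)%type) = (g - g', k - k').
Proof. by []. Qed.
Lemma pair_add (g g' : G) (k k' : int) : ((g, k) + (g', k') : (G * int)%type) = (g + g', k + k').
Proof. by []. Qed.

Lemma pair_natmul (g : G) (k : int) n : ((g, k) *+ n : (G * int)%type) = (g *+ n, k *+ n).
Proof. by elim: n => [|n IH]; rewrite ?mulr0n // !mulrS IH. Qed.

Lemma Hq_good : good_enlargement r N p A f qH iq.
Proof.
split; [|split; [|split; [|split; [|split]]]].
- split; [exact: qH_value|split; [|split; [|split]]].
  + case: hsep => D [cD hD].
    exists (piq @` (D `*` [set: int])); split.
      apply: card_le_trans (card_image_le _ _) _.
      by apply: countableX => //; exact: countableP.
    move=> y e e0; have [[g k] ->] := piq_surj y.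
    have [d hd hde] := hD g e e0.
    exists (piq (d, k)); first by exists (d, k).
    rewrite -piqB qH_pi.
    have -> : ((g, k) - (d, k) : (G * int)%type) = (g - d, 0) by rewrite pair_sub subrr.
    by rewrite qbG.
  + move=> a; apply: (@bounded_O0 R (fun n => qH (a *+ n)) M0) => n.
    have [x ->] := piq_surj (a *+ n); rewrite qH_pi qbge0 qbM0 //.
  + move=> y; have [x ->] := piq_surj y; rewrite qH_pi.
    by case: r hrM0 => //= h; apply: le_trans h; exact: qbM0.
  + move=> hN0 y; have [[g k] ->] := piq_surj y.
    rewrite -piqMn pair_natmul hexp // -piq0; apply/piqE; rewrite subr0 qbZ //.
    rewrite (hMN hN0) -mulr_natr; apply: dvdz_mull; rewrite natz; exact: dvdzz.
- by exists M0 => y; have [x ->] := piq_surj y; rewrite qH_pi qbM0.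
- move=> g g' /piqE; rewrite pair_sub subrr => h.
  by apply/eqP; rewrite -subr_eq0; apply/eqP; case: hval => _ [hz _]; apply/hz; rewrite -qbG.
- by move=> x y; rewrite /iq -piqD pair_add addr0.
- by move=> x; rewrite /iq qH_pi qbG.
- exists bq => a ha; rewrite /iq /bq -piqB qH_pi pair_sub.
  by rewrite subr0 sub0r qbA.
Qed.

Lemma Hq_finite : finite_set [set: G] -> (0 < M)%N -> finite_set [set: Hq].
Proof.
move=> hG hM.
apply: (@sub_finite_set _ _ (piq @` ([set: G] `*` (Posz @` `I_M)))).
  move=> y _; have [[g k] ->] := piq_surj y.
  have Mz : (M%:Z != 0) by rewrite eqz_nat -lt0n.
  have hm0 := modz_ge0 k Mz.
  have hmM : ((k %% M%:Z)%Z < M%:Z) by apply: ltz_pmod; rewrite ltz_nat.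
  move: hm0 hmM; case E: (k %% M%:Z)%Z => [n|n] // _ hn.
  exists (g, Posz n); first by split=> //; exists n => //=; move: hn; rewrite ltz_nat.
  apply/piqE; rewrite /=.
  have -> : ((g, Posz n) - (g, k) : (G * int)%type) = (0, Posz n - k) by rewrite pair_sub subrr.
  apply: qbZ.
  have -> : Posz n - k = - ((k %/ M%:Z)%Z * M%:Z) by rewrite -E {2}(divz_eq k M%:Z); ring.
  by rewrite dvdzE abszN -dvdzE; apply: dvdz_mull; exact: dvdzz.
apply: finite_image; apply: finite_setX => //; apply: finite_image; exact: finite_II.
Qed.

Lemma Hq_Q (Q : set R) : Q 0 -> (forall x y, Q x -> 0 <= x -> Q y -> 0 <= y -> Q (x + y)) ->
  (forall x, Q (p x)) -> (forall a, A a -> Q (f a)) -> Q M0 ->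
  (forall x, exists2 v, Vs p A f M M0 x v & qb x = v) ->
  forall y, Q (qH y).
Proof.
move=> Q0 QD Qp Qf QM0 hatt y.
have [x ->] := piq_surj y; rewrite qH_pi.
have [v [P [Nn [hP [hN [_ ->]]]]] ->] := hatt x.
have QsF l : inA A l -> Q (sF f l).
  elim: l => [|z l IH] hl; first by rewrite /sF big_nil.
  have [hz hl'] := inA_cons hl; rewrite /sF big_cons.
  apply: (QD); [exact: Qf | exact: fge0 | exact: IH | exact: (sF_ge0 fge0 hl')].
have Qc : Q (cost p f x P Nn).
  rewrite /cost; apply: (QD); [|by rewrite addr_ge0 ?pge0 ?(sF_ge0 fge0 hP)|exact: QsF|exact: (sF_ge0 fge0 hN)].
  apply: (QD); [exact: Qp|exact: pge0|exact: QsF|exact: (sF_ge0 fge0 hP)].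
by have [h|h] := leP (cost p f x P Nn) M0.
Qed.

End Build.

Lemma sum_shift (G : zmodType) (V : zmodType) (a0 : G) (l : seq G) (F : G -> V) :
  \sum_(1 <= k < (size l).+1) F (nth a0 l k.-1) = \sum_(x <- l) F x.
Proof. by rewrite big_add1 /= [RHS](big_nth a0). Qed.

Section Blocks.
Variables (R : realType) (r : rparam) (N : nat) (G : zmodType) (p : G -> R)
  (A : set G) (f : G -> R) (a0 : G).
Hypotheses (hN1 : N <> 1%N) (p0 : p 0 = 0) (pN : forall x, p (- x) = p x)
  (hexp : has_exponent G N)
  (kat1 : forall x y, A x -> A y -> f x <= p (x - y) + f y)
  (kat2 : forall x y, A x -> A y -> p (x - y) <= f x + f y).
Hypothesis hH : (2 < N)%N -> forall a : nat -> G, (forall k, (1 <= k <= N)%N -> A (a k)) ->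
     `|p (\sum_(1 <= k < N.+1) a k) - f (a N)| <= \sum_(1 <= k < N) f (a k).

Lemma neg2 (y : G) : N = 2%N -> - y = y.
Proof.
move=> e; have h : y *+ 2 = 0 by rewrite -e; apply: hexp; rewrite e.
move: h; rewrite mulr2n => /eqP.
by rewrite addr_eq0 => /eqP h; rewrite -h.
Qed.

Lemma nth_inA l k : inA A l -> (1 <= k <= size l)%N -> A (nth a0 l k.-1).
Proof. by move=> hl /andP [h1 h2]; apply: hl; apply: mem_nth; move: h1 h2; case: k. Qed.

Lemma BHN1 l : inA A l -> size l = N -> p (\sum_(x <- l) x) <= \sum_(x <- l) f x.
Proof.
move=> hl hs.
have [N0|N0] := eqVneq N 0%N.
  by move: hs; rewrite N0 => /size0nil ->; rewrite !big_nil p0.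
have [N2|N2] := eqVneq N 2%N.
  move: hs; rewrite N2; case: l hl => [|x [|y [|z l]]] // hl _.
  have [hx hl'] := inA_cons hl; have [hy _] := inA_cons hl'.
  rewrite !big_cons !big_nil !addr0 -{1}(neg2 y N2); exact: kat2.
have N3 : (2 < N)%N by move: N0 N2 hN1; lia.
have hA' : forall k, (1 <= k <= N)%N -> A (nth a0 l k.-1).
  by move=> k hk; apply: nth_inA => //; rewrite hs.
have := hH N3 hA'.
rewrite -hs /= (sum_shift a0 l (fun x => x)).
have -> : \sum_(x <- l) f x = \sum_(1 <= k < size l) f (nth a0 l k.-1) + f (nth a0 l (size l).-1).
  by rewrite -(sum_shift a0 l f) big_nat_recr //= hs; lia.
rewrite ler_norml => /andP [_ h]; lra.
Qed.

Lemma BHN2 a l : A a -> inA A l -> (size l).+1 = N ->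
  f a <= p (a + \sum_(x <- l) x) + \sum_(x <- l) f x.
Proof.
move=> ha hl hs.
have [N2|N2] := eqVneq N 2%N.
  move: hs; rewrite N2; case: l hl => [|y [|z l]] // hl _.
  have [hy _] := inA_cons hl.
  rewrite !big_cons !big_nil !addr0 -{1}(neg2 y N2); exact: kat1.
have N3 : (2 < N)%N by move: N2 hN1 hs; lia.
set l' := rcons l a.
have hl' : inA A l'.
  by move=> x; rewrite /l' mem_rcons inE => /orP [/eqP ->|/hl].
have hs' : size l' = N by rewrite /l' size_rcons.
have hA' : forall k, (1 <= k <= N)%N -> A (nth a0 l' k.-1).
  by move=> k hk; apply: nth_inA => //; rewrite hs'.
have := hH N3 hA'.
rewrite -hs' /= (sum_shift a0 l' (fun x => x)).
have hlast : nth a0 l' (size l').-1 = a by rewrite /l' size_rcons /= nth_rcons ltnn eqxx.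
have -> : \sum_(1 <= k < (size l')) f (nth a0 l' k.-1) = \sum_(x <- l) f x.
  have := sum_shift a0 l' f; rewrite big_nat_recr /=; last by rewrite hs'; lia.
  rewrite hlast /l' -cats1 big_cat big_seq1 /= => /addIr.
  by [].
rewrite hlast /l' -cats1 big_cat big_seq1 /= addrC.
by rewrite ler_norml => /andP [h _]; lra.
Qed.
End Blocks.

Unset Implicit Arguments. Set Strict Implicit. Set Printing Implicit Defensive.

Theorem theorem2p17 (R : realType) (r : rparam) (N : nat) (G : zmodType)
    (p : G -> R) (A : set G) (f : G -> R) :
  N <> 1%N ->
  in_frakG r N p -> bounded_value p ->
  A !=set0 -> katetov_r r p A f ->
  ((2 < N)%N -> forall a : nat -> G, (forall k, (1 <= k <= N)%N -> A (a k)) ->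
     `|p (\sum_(1 <= k < N.+1) a k) - f (a N)| <= \sum_(1 <= k < N) f (a k)) ->
  (exists (H : zmodType) (q : H -> R) (i : G -> H),
      good_enlargement r N p A f q i) /\
  (forall Q : set R,
      [set x : R | 0 <= x] `<=` closure (Q `&` [set x : R | 0 <= x]) ->
      Q 0 ->
      (forall x y, Q x -> 0 <= x -> Q y -> 0 <= y -> Q (x + y)) ->
      finite_set [set: G] ->
      (forall x, Q (p x)) -> (forall a, A a -> Q (f a)) ->
      exists (H : zmodType) (q : H -> R) (i : G -> H),
        good_enlargement r N p A f q i /\
        finite_set [set: H] /\ (forall y, Q (q y))).
Proof.
move=> hN1 hG [Mp hMp] [a0 ha0] hK hH.
have hG' := hG.
case: hG' => hval [hsep [hO0 [hr hexp]]].
have p0 := p0 hval; have pge0 := pge0 hval; have pN := pN hval.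
have fge0 := fge0 hK.
have kat1 := kat1 hK; have kat2 := kat2 hK.
have fr : forall a, A a -> bounded_by_r r (f a) by case: hK => h _ a /h [].
have BH1 := BHN1 a0 hN1 p0 hexp kat2 hH.
have BH2 := BHN2 a0 hN1 hexp kat1 hH.
split.
  have [M0 [pM0 [fM0 hrM0]]] : exists M0, (forall x, p x <= M0) /\
      (forall a, A a -> f a <= M0) /\ bounded_by_r r M0.
    case: r hr fr {hG hK hH BH1 BH2} => hr fr.
      by exists 1; split; [exact: hr | split; [exact: fr | exact: lexx]].
    exists (Mp + f a0); split; [|split=> //].
      by move=> x; have := hMp x; have := fge0 _ ha0; lra.
    move=> a ha; apply: le_trans (kat1 _ _ ha ha0) _; rewrite lerD2r; exact: hMp.
  have HG := Hq_good hval hsep hexp hK ha0 BH1 BH2 pM0 fM0 hrM0 (fun _ => erefl).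
  by do 3 eexists; exact: HG.
move=> Q _ Q0 QD hGfin Qp Qf.
have [eG heG] := (finite_seqP [set: G]).1 hGfin.
have hAfin : finite_set A := sub_finite_set (@subsetT _ A) hGfin.
have [eA heA] := (finite_seqP A).1 hAfin.
have inEA : forall x, A x -> x \in eA by move=> x; rewrite heA.
have inEG : forall x : G, x \in eG.
  by move=> x; have : [set: G] x by []; rewrite heG.
have [[a1 [ha1 fa1]]|hnz] := pselect (exists a1, A a1 /\ f a1 = 0).
  exists G, p, id; split; last by split.
  split; first exact: hG.
  split; first by exists Mp.
  split; first by move=> x y.
  split; first by [].
  split; first by [].
  exists a1 => a ha /=; apply/eqP; rewrite eq_le.
  have := kat1 _ _ ha ha1; have := kat2 _ _ ha ha1; rewrite fa1 !addr0 => -> ->.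
  done.
have fpos : forall a, A a -> 0 < f a.
  move=> a ha; rewrite lt_neqAle fge0 // andbT; apply/eqP => h.
  by apply: hnz; exists a; split.
have [m [a1 ha1 <-] hmin] : exists2 m, (f @` A) m & forall y, (f @` A) y -> m <= y.
  apply: (@min_attained R (map f eA)); first by exists (f a0), a0.
  by move=> v [a ha <-]; rewrite /= map_f // inEA.
set d := f a1.
have d0 : 0 < d by exact: fpos.
have hd : forall a, A a -> d <= f a by move=> a ha; apply: hmin; exists a.
set X := [set v | (exists x, v = p x) \/ (exists a, A a /\ v = f a)].
have [M0 hM0X hM0max] : exists2 m, X m & forall y, X y -> y <= m.
  apply: (@max_attained R (map p eG ++ map f eA)); first by exists (p 0); left; exists 0.
  move=> v [[x ->]|[a [ha ->]]]; rewrite /= mem_cat map_f ?inEG ?inEA //= orbT //.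
have pM0 : forall x, p x <= M0 by move=> x; apply: hM0max; left; exists x.
have fM0 : forall a, A a -> f a <= M0 by move=> a ha; apply: hM0max; right; exists a.
have hrM0 : bounded_by_r r M0.
  by case: hM0X => [[x ->]|[a [ha ->]]]; [exact: hr|exact: fr].
have QM0 : Q M0 by case: hM0X => [[x ->]|[a [ha ->]]]; [exact: Qp|exact: Qf].
have M0ge0 : 0 <= M0 by apply: le_trans (pM0 0); rewrite p0.
set K := Num.Def.archi_bound (M0 / d).
have hKd : M0 <= K%:R * d.
  have h := @archi_boundP R (M0 / d) (divr_ge0 M0ge0 (ltW d0)).
  by apply/ltW; rewrite -ltr_pdivrMr.
have [M [Mpos [hMN [BH1' BH2']]]] : exists M, (0 < M)%N /\ ((N <> 0)%N -> M = N) /\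
    (forall l, inA A l -> size l = M -> p (\sum_(x <- l) x) <= \sum_(x <- l) f x) /\
    (forall a l, A a -> inA A l -> (size l).+1 = M ->
       f a <= p (a + \sum_(x <- l) x) + \sum_(x <- l) f x).
  have [N0|N0] := eqVneq N 0%N.
    exists K.+2; split=> //; split; first by rewrite N0.
    split.
      move=> l hl hs; apply: le_trans (pM0 _) _; apply: le_trans hKd _.
      apply: le_trans (sF_ge hd hl); apply: ler_wpM2r; first exact: ltW.
      by rewrite ler_nat hs; lia.
    move=> a l ha hl hs; apply: le_trans (fM0 _ ha) _; apply: le_trans hKd _.
    apply: le_trans (_ : sF f l <= _); last by rewrite lerDr pge0.
    apply: le_trans (sF_ge hd hl); apply: ler_wpM2r; first exact: ltW.
    by rewrite ler_nat; move: hs; lia.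
  exists N; split; first by rewrite lt0n.
  by split=> //; split.
have hatt := qv_attained M p0 pge0 fge0 pM0 ha0 inEA hd (ltW d0) hKd.
have HG := Hq_good hval hsep hexp hK ha0 BH1' BH2' pM0 fM0 hrM0 hMN.
do 3 eexists; split; first exact: HG.
split; first exact: (Hq_finite hval hK ha0 pM0 hGfin Mpos).
exact: (Hq_Q Q0 QD Qp Qf QM0 hatt).
Qed.
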